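(* Let $G$ be a finite group of odd order. Then $\Gamma_{G,H}$ admits a perfect code for every normal subgroup $H$ of $G$.
   Context: For a normal subgroup $H$ of a finite group $G$ with identity $e$, the subgroup sum graph $\Gamma_{G,H}$ is the simple undirected graph with vertex set $G$ in which distinct vertices $x,y$ are adjacent if and only if $xy\in H\setminus\{e\}$. A perfect code in a graph is a set $C$ of vertices that is independent and such that every vertex not in $C$ is adjacent to exactly one vertex of $C$. *)

(* Defs.v *)
From mathcomp Require Import all_boot all_fingroup.
Set Implicit Arguments. Unset Strict Implicit. Unset Printing Implicit Defensive.
Local Open Scope group_scope.

(* Subgroup sum graph Gamma_{G,H} on vertex set G (a finite group, here the
   full group [set: gT]): distinct x, y adjacent iff x*y \in H \ {1}. *)
Definition ssg_adj (gT : finGroupType) (H : {set gT}) (x y : gT) : bool :=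
  (x != y) && (x * y \in H^#).

Definition perfect_code (T : finType) (V : {set T}) (e : T -> T -> bool)
    (C : {set T}) : Prop :=
  [/\ C \subset V,
      (forall x y, x \in C -> y \in C -> ~~ e x y) &
      (forall x, x \in V -> x \notin C -> #|[set c in C | e x c]| = 1%N)].

(* Main.v *)
Require Import Defs.
From mathcomp Require Import all_boot all_fingroup all_solvable.
Local Open Scope group_scope.
Set Implicit Arguments. Unset Strict Implicit.

Section Aux.
Variables (gT : finGroupType) (G H : {group gT}).
Hypotheses (oddG : odd #|G|) (nsHG : H <| G).

Lemma nGH x : x \in G -> x \in 'N(H).
Proof. by move=> xG; apply: (subsetP (normal_norm nsHG)). Qed.

Lemma cosetM_in x y : x \in G -> y \in G ->
  (x * y \in H) = (coset H y == (coset H x)^-1).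
Proof.
move=> xG yG; have nx := nGH xG; have ny := nGH yG.
apply/idP/eqP.
  move=> /coset_id; rewrite morphM // => e.
  by rewrite -[coset H y](mulKg (coset H x)) e mulg1.
move=> e; apply: coset_idr; first by rewrite groupM.
by rewrite morphM //= e mulgV.
Qed.

Lemma in_H x : x \in G -> (x \in H) = (coset H x == 1).
Proof.
move=> xG; apply/idP/eqP; first exact: coset_id.
exact: coset_idr (nGH xG).
Qed.

Lemma odd_fact x : x \in G -> coset H x = (coset H x)^-1 -> x \in H.
Proof.
move=> xG e; rewrite in_H //; set q := coset H x in e *.
have q2 : q ^+ 2 == 1 by rewrite expgS expg1 {2}e mulgV.
rewrite -order_eq1.
have d2 : #[q] %| 2 by rewrite order_dvdn.
have oq : odd #[q].
  apply: (dvdn_odd _ oddG); apply: dvdn_trans (order_dvdG xG).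
  exact: morph_order (nGH xG).
have := dvdn_leq (isT : 0 < 2) d2.
have := order_gt0 q.
by case: #[q] oq => [|[|[|]]].
Qed.

End Aux.

Theorem corollary3p3 (gT : finGroupType) (G H : {group gT}) :
  odd #|G| -> H <| G ->
  exists C : {set gT}, perfect_code G (ssg_adj H) C.
Proof.
move=> oddG nsHG.
pose S x := [set y in G | (coset H y == coset H x) || (coset H y == (coset H x)^-1)].
pose P x := repr (S x).
have SP : forall x, x \in G -> P x \in S x.
  by move=> x xG; apply: (mem_repr x); rewrite inE xG eqxx.
have Seq : forall x y, y \in S x -> S y = S x.
  move=> x y; rewrite inE => /andP[yG /orP[]/eqP e]; apply/setP => z;
    rewrite !inE e //.
  by rewrite invgK orbC.
have Peq : forall x y, y \in S x -> P y = P x by move=> x y /Seq e; rewrite /P e.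
pose C := [set x in G | if x \in H then x == 1 else (x == P x) || (x^-1 == P x)].
exists C; split.
- by apply/subsetP => x; rewrite inE => /andP[].
- move=> x y; rewrite !inE /ssg_adj => /andP[xG Cx] /andP[yG Cy].
  apply/negP => /andP[nxy]; rewrite !inE => /andP[nxy1 xyH].
  move: xyH; rewrite (cosetM_in nsHG) // => /eqP ey.
  case xH: (x \in H) Cx.
    move/eqP=> x1; subst x.
    have yH : y \in H by rewrite (in_H nsHG) // ey morph1 invg1.
    by move: Cy; rewrite yH => /eqP y1; rewrite y1 eqxx in nxy.
  move=> Cx.
  have yH : y \notin H.
    rewrite (in_H nsHG) // ey invg_eq1 -(in_H nsHG) //.
    by rewrite xH.
  rewrite (negbTE yH) in Cy.
  have ySx : y \in S x by rewrite inE yG ey eqxx orbT.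
  rewrite (Peq _ _ ySx) in Cy.
  move: Cx Cy nxy nxy1; set p := P x; clearbody p.
  case/orP=> /eqP hx; case/orP=> /eqP hy.
  + by rewrite hx hy eqxx.
  + by rewrite hx -[y]invgK hy mulgV eqxx.
  + by rewrite -[x]invgK hx hy mulVg eqxx.
  + by rewrite -[x]invgK -[y]invgK hx hy eqxx.
- move=> x xG; rewrite inE xG /= => nCx.
  case xH: (x \in H) nCx => nCx.
    have -> : [set c in C | ssg_adj H x c] = [set 1].
      apply/setP => c; rewrite !inE /ssg_adj !inE.
      apply/idP/idP.
        case/andP=> /andP[cG]; case cH: (c \in H) => //.
        by move=> _ /and3P[_ _ xcH]; rewrite -(groupMl c xH) xcH in cH.
      move/eqP=> ->; rewrite group1 eqxx /= mulg1 xH andbT.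
      by rewrite group1 /= nCx.
    by rewrite cards1.
  have xH' : x \notin H by rewrite xH.
  have [t [tG ct tp]] : exists t, [/\ t \in G, coset H t = (coset H x)^-1 &
      (t == P x) || (t^-1 == P x)].
    have := SP x xG; rewrite inE => /andP[pG /orP[]/eqP e].
      exists (P x)^-1; rewrite groupV pG invgK eqxx orbT; split => //.
      by rewrite morphV //= ?e // (nGH nsHG).
    by exists (P x); rewrite pG eqxx.
  have ctx : coset H t != 1.
    by rewrite ct invg_eq1 -(in_H nsHG).
  have tSx : t \in S x by rewrite inE tG ct eqxx orbT.
  have -> : [set c in C | ssg_adj H x c] = [set t].
    apply/setP => c; rewrite !inE /ssg_adj !inE.
    apply/idP/idP.
      case/andP=> /andP[cG Cc] /and3P[nxc nxc1 xcH].
      move: xcH; rewrite (cosetM_in nsHG) // => /eqP cc.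
      have cH : c \notin H by rewrite (in_H nsHG) // cc -ct.
      rewrite (negbTE cH) in Cc.
      have cSx : c \in S x by rewrite inE cG cc eqxx orbT.
      rewrite (Peq _ _ cSx) in Cc.
      apply/negPn/negP => nct.
      have ct' : c = t^-1.
        move: Cc tp nct; set p := P x; clearbody p.
        case/orP=> /eqP hc; case/orP=> /eqP ht.
        * by rewrite hc ht eqxx.
        * by rewrite hc -ht.
        * by rewrite -[c]invgK hc ht.
        * by rewrite -[c]invgK -[t]invgK hc ht eqxx.
      have : coset H x = (coset H x)^-1.
        by rewrite -cc ct' morphV //= ?ct ?invgK // (nGH nsHG).
      by move/(odd_fact oddG nsHG xG); rewrite xH.
    move/eqP=> ->; rewrite tG.
    have tH : t \notin H by rewrite (in_H nsHG).
    rewrite (negbTE tH) (Peq _ _ tSx) tp /=.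
    apply/and3P; split.
    + apply/eqP => ext; subst t.
      by move: (odd_fact oddG nsHG xG ct); rewrite xH.
    + apply/eqP => xt1.
      have tx : t = x^-1 by rewrite -[t](mulKg x) xt1 mulg1.
      by move: nCx tp; rewrite tx invgK /= orbC => /negP.
    + by rewrite (cosetM_in nsHG) // ct.
  by rewrite cards1.
Qed.
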